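(* Let $A$ be a finite weighted Büchi automaton (WBA) and $c\in\mathbb{N}$. Then $A$ admits a Büchi accepted $c$-feasible infinite run if and only if $A$ admits a Büchi accepted $c$-feasible lasso, i.e. an infinite run of the form $\gamma_1\gamma_2^\omega$ where $\gamma_1,\gamma_2$ are finite runs, $\gamma_2$ is nonempty and starts and ends in the same state (the last state of $\gamma_1$), and $\gamma_2^\omega$ denotes the infinite repetition of $\gamma_2$.
   Context: A weighted (transition-based, generalized) Büchi automaton (WBA) is a structure $A=(\Sigma,\mathcal{M},S,s_0,T)$ where $\Sigma$ is a finite alphabet, $\mathcal{M}$ is a finite set of colors, $S$ is a set of states with initial state $s_0\in S$, and $T\subseteq S\times\Sigma\times 2^{\mathcal{M}}\times\mathbb{R}\times S$ is a set of transitions; a transition $(s,\ell,M,w,s')$ has letter $\ell$, color set $M$ and weight $w$. $A$ is finite if $S$ and $T$ are finite and $T\subseteq S\times\Sigma\times 2^{\mathcal{M}}\times\mathbb{Z}\times S$ (integer weights). A run is a finite or infinite sequence of transitions $s_1\to s_2\to\cdots$ in which each transition starts in the state where the previous one ends. A weak upper bound $b\in\mathbb{N}$ is fixed throughout. For an initial credit $c$ and a run $s_1\xrightarrow{w_1}s_2\xrightarrow{w_2}\cdots$, the accumulated weights are $e_1=\min(b,c)$ and $e_{i+1}=\min(b,e_i+w_i)$; the run is $c$-feasible (i.e. $(c,b)$-feasible) if $e_i\ge 0$ for all $i$. An infinite run $s_1\to_{M_1}s_2\to_{M_2}\cdots$ is Büchi accepted if every color $m\in\mathcal{M}$ lies in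 $M_j$ for infinitely many $j$. *)

(* Defs.v *)
From HB Require Import structures.
From Stdlib Require List.
From mathcomp Require Import all_boot all_order all_algebra.
Set Implicit Arguments. Unset Strict Implicit. Unset Printing Implicit Defensive.
Import Order.TTheory GRing.Theory Num.Theory.
Local Open Scope ring_scope.

Record transition (Sigma Col state : finType) := Trans {
  tr_src : state;
  tr_lab : Sigma;
  tr_col : {set Col};
  tr_w   : int;
  tr_dst : state }.

Record WBA (Sigma Col : finType) := MkWBA {
  state : finType;
  s0 : state;
  trans : seq (transition Sigma Col state) }.

Section Runs.
Variables (Sigma Col : finType) (A : WBA Sigma Col).
Local Notation tr := (transition Sigma Col (state A)).

Definition is_trans (t : tr) : Prop := List.In t (trans A).

Fixpoint is_fin_run (g : seq tr) : Prop :=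
  match g with
  | [::] => True
  | t :: g' => is_trans t /\
      match g' with
      | [::] => True
      | t' :: _ => tr_dst t = tr_src t' /\ is_fin_run g'
      end
  end.

Definition is_inf_run (r : nat -> tr) : Prop :=
  forall i, is_trans (r i) /\ tr_dst (r i) = tr_src (r i.+1).

Fixpoint energy (b : nat) (c : int) (r : nat -> tr) (i : nat) : int :=
  match i with
  | 0 => Num.min (b%:Z) c
  | i'.+1 => Num.min (b%:Z) (energy b c r i' + tr_w (r i'))
  end.

Definition feasible (b : nat) (c : int) (r : nat -> tr) : Prop :=
  forall i, 0 <= energy b c r i.

Definition buchi_accepted (r : nat -> tr) : Prop :=
  forall m : Col, forall N : nat, exists j, (N <= j)%N /\ m \in tr_col (r j).

(* the infinite sequence g1 g2^omega, where g2 = t :: g2' is nonempty *)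
Definition lasso (g1 : seq tr) (t : tr) (g2' : seq tr) : nat -> tr :=
  fun i => if (i < size g1)%N then nth t g1 i
           else nth t (t :: g2') ((i - size g1) %% (size g2').+1).

Definition is_lasso (g1 : seq tr) (t : tr) (g2' : seq tr) : Prop :=
  is_fin_run g1 /\ is_fin_run (t :: g2') /\
  tr_dst (last t g2') = tr_src t /\
  (forall (t1 : tr) g1', g1 = t1 :: g1' -> tr_dst (last t1 g1') = tr_src t).

End Runs.

Arguments is_inf_run {Sigma Col} A r.
Arguments is_lasso {Sigma Col} A g1 t g2'.

(* Main.v *)
Require Import Defs.
From HB Require Import structures.
From mathcomp Require Import all_boot all_order all_algebra.
From mathcomp Require Import zify.
From Stdlib Require Import ClassicalEpsilon.
Import Order.TTheory GRing.Theory Num.Theory.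
Local Open Scope ring_scope.

Lemma energy_le_b (Sigma Col : finType) (A : WBA Sigma Col) (b : nat) (c : int)
  (r : nat -> transition Sigma Col (state A)) n :
  energy b c r n <= b%:Z.
Proof. by case: n => [|n] /=; rewrite ge_min lexx. Qed.

Lemma energy_ext (Sigma Col : finType) (A : WBA Sigma Col) (b : nat) (c : int)
  (r r' : nat -> transition Sigma Col (state A)) n :
  (forall k, (k < n)%N -> r k = r' k) -> energy b c r n = energy b c r' n.
Proof.
elim: n => [|n IH] H //=.
rewrite IH ?H //; move=> k Hk; apply: H; lia.
Qed.

Lemma lasso_base (Sigma Col : finType) (A : WBA Sigma Col)
  (r : nat -> transition Sigma Col (state A)) i l n :
  (n < i + l.+1)%N -> lasso (map r (iota 0 i)) (r i) (map r (iota i.+1 l)) n = r n.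
Proof.
move=> Hn; rewrite /lasso !size_map !size_iota.
case: ifP => Hi.
  by rewrite (nth_map 0%N) ?size_iota // nth_iota.
have -> : r i :: map r (iota i.+1 l) = map r (iota i l.+1) by [].
have Hlt : (n - i < l.+1)%N by lia.
rewrite modn_small // (nth_map 0%N) ?size_iota // nth_iota //.
congr r; lia.
Qed.

Lemma lasso_per (Sigma Col : finType) (A : WBA Sigma Col)
  (r : nat -> transition Sigma Col (state A)) i l n :
  (i <= n)%N ->
  lasso (map r (iota 0 i)) (r i) (map r (iota i.+1 l)) (n + l.+1)
  = lasso (map r (iota 0 i)) (r i) (map r (iota i.+1 l)) n.
Proof.
move=> Hn; rewrite /lasso !size_map !size_iota.
have -> : (n + l.+1 < i)%N = false by lia.
have -> : (n < i)%N = false by lia.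
have -> : (n + l.+1 - i = (n - i) + l.+1)%N by lia.
by rewrite modnDr.
Qed.

Lemma lasso_perN (Sigma Col : finType) (A : WBA Sigma Col)
  (r : nat -> transition Sigma Col (state A)) i l n k :
  (i <= n)%N ->
  lasso (map r (iota 0 i)) (r i) (map r (iota i.+1 l)) (n + k * l.+1)
  = lasso (map r (iota 0 i)) (r i) (map r (iota i.+1 l)) n.
Proof.
move=> Hn; elim: k => [|k IH]; first by rewrite mul0n addn0.
have -> : (n + k.+1 * l.+1 = (n + k * l.+1) + l.+1)%N by rewrite mulSn; lia.
rewrite lasso_per //; lia.
Qed.

Lemma ind_principle (i L : nat) (P : nat -> Prop) : (0 < L)%N ->
  (forall n, (n < i + L)%N -> P n) -> (forall n, (i <= n)%N -> P n -> P (n + L)%N) ->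
  forall n, P n.
Proof.
move=> HL Hb Hs n; elim/ltn_ind: n => n IH.
case: (ltnP n (i + L)) => H; first exact: Hb.
have -> : n = (n - L + L)%N by lia.
apply: Hs; first lia.
apply: IH; lia.
Qed.

Lemma fin_run_iota (Sigma Col : finType) (A : WBA Sigma Col)
  (r : nat -> transition Sigma Col (state A)) :
  is_inf_run A r -> forall n s, is_fin_run (map r (iota s n)).
Proof.
move=> Hr; elim=> [|n IH] s //=.
split; first exact: (Hr s).1.
case: n IH => [|n] IH //=.
split; first exact: (Hr s).2.
exact: (IH s.+1).
Qed.

Lemma last_iota {T : Type} (r : nat -> T) n s :
  last (r s) (map r (iota s.+1 n)) = r (s + n)%N.
Proof.
elim: n s => [|n IH] s /=; first by rewrite addn0.
by rewrite IH addSnnS.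
Qed.

Lemma lasso_ok (Sigma Col : finType) (A : WBA Sigma Col) (b : nat) (c : int)
  (r : nat -> transition Sigma Col (state A)) i l :
  is_inf_run A r -> feasible b c r ->
  tr_src (r i) = tr_src (r (i + l.+1)%N) ->
  energy b c r i = energy b c r (i + l.+1)%N ->
  (forall m : Col, exists k, (i <= k < i + l.+1)%N /\ m \in Defs.tr_col (r k)) ->
  let g1 := map r (iota 0 i) in let t := r i in let g2' := map r (iota i.+1 l) in
  is_lasso A g1 t g2' /\ is_inf_run A (lasso g1 t g2') /\
      feasible b c (lasso g1 t g2') /\ buchi_accepted (lasso g1 t g2').
Proof.
move=> Hr Hf Hs He Hc g1 t g2'.
set lr := lasso g1 t g2'.
have Hbase : forall n, (n < i + l.+1)%N -> lr n = r n by move=> n Hn; exact: lasso_base.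
have Hper : forall n, (i <= n)%N -> lr (n + l.+1)%N = lr n by move=> n Hn; exact: lasso_per.
have Hii : lr (i + l.+1)%N = r i by rewrite Hper // Hbase //; lia.
split; [|split; [|split]].
- split; first exact: fin_run_iota.
  split; first by rewrite /t /g2'; exact (@fin_run_iota _ _ _ r Hr l.+1 i).
  split.
    rewrite /g2' /t last_iota Hs addnS; exact: (Hr _).2.
  move=> t1 g1'; rewrite /g1 /t; clear Hbase Hper Hii lr g2' t g1.
  case: i Hs He Hc => [|i] //= _ _ _ [<- <-].
  by rewrite (last_iota r i 0%N) add0n; exact: (Hr _).2.
- move=> n; pattern n; apply: (@ind_principle i l.+1) => //.
    move=> k Hk; rewrite Hbase //; split; first exact: (Hr k).1.
    case: (ltnP k.+1 (i + l.+1)) => Hk2.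
      by rewrite Hbase //; exact: (Hr k).2.
    have Hk' : k.+1 = (i + l.+1)%N by lia.
    by rewrite Hk' Hii Hs -Hk'; exact: (Hr k).2.
  by move=> k Hk; rewrite -addSn !Hper //; lia.
- have Hext : forall n, (n <= i + l.+1)%N -> energy b c lr n = energy b c r n.
    by move=> n Hn; apply: energy_ext => k Hk; apply: Hbase; lia.
  have Hep : forall d, energy b c lr (i + d + l.+1)%N = energy b c lr (i + d)%N.
    elim=> [|d IH].
      by rewrite addn0 !Hext // ?He //; lia.
    have -> : (i + d.+1 + l.+1 = (i + d + l.+1).+1)%N by lia.
    have -> : (i + d.+1 = (i + d).+1)%N by lia.
    rewrite /= IH Hper //; lia.
  move=> n; pattern n; apply: (@ind_principle i l.+1) => //.
    by move=> k Hk; rewrite Hext //; lia.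
  move=> k Hk; have -> : k = (i + (k - i))%N by lia.
  by rewrite Hep.
- move=> m N; have [k [Hk Hm]] := Hc m.
  exists (k + N * l.+1)%N; split.
    by rewrite mulnS; lia.
  rewrite /lr lasso_perN; last lia.
  by rewrite -/lr Hbase //; lia.
Qed.

Theorem lemma2 (Sigma Col : finType) (A : WBA Sigma Col) (b c : nat) :
  (exists r : nat -> transition Sigma Col (state A),
      is_inf_run A r /\ feasible b c%:Z r /\ buchi_accepted r)
  <->
  (exists (g1 : seq (transition Sigma Col (state A)))
          (t : transition Sigma Col (state A)) (g2' : seq (transition Sigma Col (state A))),
      is_lasso A g1 t g2' /\ is_inf_run A (lasso g1 t g2') /\
      feasible b c%:Z (lasso g1 t g2') /\ buchi_accepted (lasso g1 t g2')).
Proof.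
split; last first.
  by move=> [g1 [t [g2' [_ H]]]]; exists (lasso g1 t g2').
move=> [r [Hr [Hf Hb]]].
have cover : forall N, exists M, (N < M)%N /\
    forall m : Col, exists k, (N <= k < M)%N /\ m \in Defs.tr_col (r k).
  move=> N.
  suff : forall s : seq Col, exists M, (N < M)%N /\
      forall m, m \in s -> exists k, (N <= k < M)%N /\ m \in Defs.tr_col (r k).
    case/(_ (enum Col)) => M [HM H]; exists M; split => // m.
    by apply: H; rewrite mem_enum.
  elim=> [|m0 s [M [HM IH]]]; first by exists N.+1.
  have [j [Hj Hm]] := Hb m0 N.
  exists (maxn M j.+1); split; first lia.
  move=> m; rewrite inE => /orP [/eqP -> | Hs].
    by exists j; split => //; lia.
  have [k [Hk Hk2]] := IH m Hs; exists k; split => //; lia.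
have [nx Hnx] : {nx : nat -> nat | forall N, (N < nx N)%N /\
    forall m : Col, exists k, (N <= k < nx N)%N /\ m \in Defs.tr_col (r k)}.
  exists (fun N => proj1_sig (constructive_indefinite_description _ (cover N))).
  move=> N; exact: (proj2_sig (constructive_indefinite_description _ (cover N))).
pose p := fun k => iter k nx 0%N.
have pmono : forall a d, (p a + d <= p (a + d))%N.
  move=> a; elim=> [|d IH]; first by rewrite !addn0.
  have -> : (a + d.+1 = (a + d).+1)%N by lia.
  have -> : (p (a + d).+1 = nx (p (a + d)))%N by [].
  have := (Hnx (p (a + d)%N)).1; lia.
have Eb : forall n, (`|energy b c%:Z r n|%N < b.+1)%N.
  move=> n; rewrite ltnS -lez_nat gez0_abs ?Hf //; exact: energy_le_b.
pose T := (state A * 'I_b.+1)%type.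
pose conf := fun n => (tr_src (r n), inord `|energy b c%:Z r n|%N : 'I_b.+1) : T.
pose g := fun x : 'I_#|{: T}|.+1 => conf (p x).
have : ~~ injectiveb g.
  apply/negP => /injectiveP Hi.
  by have := @leq_card _ _ g Hi; rewrite card_ord ltnn.
case/injectivePn => x [y Hxy Hg].
wlog Hlt : x y Hxy Hg / (x < y)%N.
  move=> W; case: (ltngtP x y) => H; first exact: W H.
    by apply: (W y x) => //; rewrite eq_sym.
  by move/val_inj: H => H; rewrite H eqxx in Hxy.
have Hxy1 := pmono x.+1 (y - x.+1)%N.
rewrite (_ : (x.+1 + (y - x.+1) = y)%N) in Hxy1; last lia.
have Hpx1 : p x.+1 = nx (p x) by [].
have Hnxx := Hnx (p x).
set i := p x in Hxy1 Hpx1 Hnxx Hg.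
set l := (p y - i).-1.
have Hj : p y = (i + l.+1)%N.
  rewrite /l; have := Hnxx.1; lia.
case: Hg => Hs He.
have He' : energy b c%:Z r i = energy b c%:Z r (i + l.+1)%N.
  have := congr1 (@nat_of_ord _) He; rewrite !inordK // -Hj => Habs.
  by rewrite -(gez0_abs (Hf i)) -(gez0_abs (Hf (p y))) Habs.
rewrite Hj in Hs.
have Hc : forall m : Col, exists k, (i <= k < i + l.+1)%N /\ m \in Defs.tr_col (r k).
  move=> m; have [k [Hk Hm]] := Hnxx.2 m; exists k; split => //; lia.
have := @lasso_ok _ _ _ _ _ r _ _ Hr Hf Hs He' Hc.
move=> [H1 [H2 [H3 H4]]].
by do 3 eexists; split; [exact: H1 | split; [exact: H2 | split; [exact: H3 | exact: H4]]].
Qed.
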